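(* Let $N\ge2$, $b_1,\dots,b_N\in\{0,1\}$ with $b_N=1$ and $\sum_j b_j2^{N-j}>1$, and let $\rho$ be the largest real root of $x^N-\sum_{j=1}^N b_jx^{N-j}$ (so $1<\rho<2$). Let $Z[\rho]$ denote the set of numbers $\sum_{k=0}^n z_k\rho^k$ with $n\ge0$ and $z_k\in\{0,1\}$. Then $2\notin Z[\rho]$. *)

(* Defs.v *)
From mathcomp Require Import all_boot all_order all_algebra.
From mathcomp Require Import reals.
Set Implicit Arguments. Unset Strict Implicit. Unset Printing Implicit Defensive.
Import Order.TTheory GRing.Theory Num.Theory.
Local Open Scope ring_scope.

Definition beta_poly (R : realType) (N : nat) (b : nat -> bool) : {poly R} :=
  'X^N - \sum_(1 <= j < N.+1) (b j)%:R *: 'X^(N - j).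

Definition largest_real_root (R : realType) (p : {poly R}) (rho : R) : Prop :=
  root p rho /\ (forall x : R, root p x -> x <= rho).

Definition Zrho (R : realType) (rho : R) (y : R) : Prop :=
  exists (n : nat) (z : nat -> bool),
    y = \sum_(0 <= k < n.+1) (z k)%:R * rho ^+ k.

(* Main.v *)
Require Import Defs.
From mathcomp Require Import all_boot all_order all_algebra.
From mathcomp Require Import reals zify ring lra.
Import Order.TTheory GRing.Theory Num.Theory.
Local Open Scope ring_scope.

Lemma mod2M (x M : nat) : (x < M + M)%N ->
  (x %% M = if (x < M)%N then x else x - M)%N.
Proof.
move=> h; case: ifP => h1; first by rewrite modn_small.
have h2 : (M <= x)%N by rewrite leqNgt h1.
by rewrite -{1}(subnK h2) modnDr modn_small //; lia.
Qed.

Lemma Z2_odd (z : int) : ~~ (2 %| z)%Z -> (z%:~R : 'Z_2) = 1.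
Proof.
move=> hz; rewrite {1}(divz_eq z 2) intrD intrM.
have -> : ((2%:Z)%:~R : 'Z_2) = 0 by apply/val_inj.
rewrite mulr0 add0r.
have : (z %% 2)%Z = 1.
  have h1 := modz_ge0 z (isT : (2:int) != 0).
  have h2 := ltz_pmod z (isT : (0:int) < 2).
  have h3 : (z %% 2)%Z != 0 by apply: contra hz => /eqP /dvdz_mod0P.
  lia.
by move=> ->.
Qed.

Section B.
Variables (R : numFieldType) (m : nat) (rho : R) (c : 'I_m.+1 -> int).
Hypothesis hrho : rho ^+ m.+1 = 2.

Definition rot (i j : 'I_m.+1) : 'I_m.+1 :=
  Ordinal (ltn_pmod (i + m.+1 - j) (ltn0Sn m)).
Definition shf (j r : 'I_m.+1) : 'I_m.+1 :=
  Ordinal (ltn_pmod (r + j) (ltn0Sn m)).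

Lemma shf_inj j : injective (shf j).
Proof.
move=> r1 r2 /(congr1 val) /= h; apply/val_inj => /=.
move: h; have := ltn_ord r1; have := ltn_ord r2; have := ltn_ord j.
move: (nat_of_ord r1) (nat_of_ord r2) (nat_of_ord j) => a b d ha hb hd.
rewrite !mod2M; try lia.
case: ifP; case: ifP; lia.
Qed.

Lemma rot_shf j r : rot (shf j r) j = r.
Proof.
apply/val_inj => /=.
have := ltn_ord r; have := ltn_ord j.
move: (nat_of_ord r) (nat_of_ord j) => a d ha hd.
rewrite (@mod2M (a + d)); last lia.
case: ifP => h.
  rewrite mod2M; last lia.
  case: ifP => h'; lia.
rewrite modn_small; lia.
Qed.

Lemma rot_diag i : rot i i = ord0.
Proof. by apply/val_inj => /=; rewrite addKn modnn. Qed.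

Definition Tm : 'M[int]_m.+1 :=
  \matrix_(i < m.+1, j < m.+1) (c (rot i j) * (if (i < j)%N then 2 else 1)).

Lemma Tm_col (j : 'I_m.+1) : \sum_(i < m.+1) rho ^+ i * (Tm i j)%:~R =
   rho ^+ j * \sum_(r < m.+1) (c r)%:~R * rho ^+ r.
Proof.
rewrite (reindex_inj (@shf_inj j)) mulr_sumr; apply: eq_bigr => r _.
rewrite mxE rot_shf.
have := ltn_ord r; have := ltn_ord j.
rewrite /shf /=.
move: (nat_of_ord r) (nat_of_ord j) => a d ha hd.
rewrite mod2M; last lia.
case: ifP => h.
  have -> : (a + d < d)%N = false by lia.
  by rewrite mulr1 exprD; ring.
have -> : (a + d - m.+1 < d)%N = true by lia.
have e : rho ^+ d * rho ^+ a = rho ^+ (a + d - m.+1) * 2.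
  by rewrite -hrho -!exprD; congr (_ ^+ _); lia.
rewrite intrM; transitivity ((c r)%:~R * (rho ^+ d * rho ^+ a)); last ring.
rewrite e; change ((2%:Z)%:~R) with (2%:R : R); ring.
Qed.

Lemma normB : \sum_(r < m.+1) (c r)%:~R * rho ^+ r = 0 -> ~~ (2 %| c ord0)%Z -> False.
Proof.
move=> h0 hodd.
have hdet : \det Tm = 0.
  apply/eqP; rewrite -(intr_eq0 R).
  have -> : ((\det Tm)%:~R : R) = \det (map_mx (fun z : int => z%:~R) Tm).
    by rewrite det_map_mx.
  apply/det0P; exists (\row_i rho ^+ i).
    apply/eqP => /matrixP /(_ 0 0); rewrite !mxE expr0 => /eqP; by rewrite oner_eq0.
  apply/matrixP => i j; rewrite !mxE.
  under eq_bigr do rewrite !mxE.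
  have e := Tm_col j; rewrite h0 mulr0 in e; rewrite -[RHS]e; apply: eq_bigr => k _; by rewrite mxE.
have := congr1 (fun z => (z%:~R : 'Z_2)) hdet => /=.
rewrite -det_map_mx det_trig.
  under eq_bigr do rewrite !mxE rot_diag ltnn mulr1.
  rewrite big1 => [|k _]; last exact: Z2_odd.
  by move/eqP; rewrite oner_eq0.
apply/is_trig_mxP => i j hij; rewrite !mxE hij rmorphM /=.
have -> : ((2%:Z)%:~R : 'Z_2) = 0 by apply/val_inj.
by rewrite mulr0.
Qed.
End B.

Lemma normA (R : numFieldType) (m K : nat) (rho : R) (a : nat -> int) :
  rho ^+ m.+1 = 2 -> (0 < K)%N ->
  \sum_(k < K) (a k)%:~R * rho ^+ k = 0 -> ~~ (2 %| a 0%N)%Z -> False.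
Proof.
move=> hrho hK h0 hodd.
pose M := m.+1.
pose c (r : 'I_M) : int := \sum_(k < K | (k %% M == r)%N) a k * 2 ^+ (k %/ M).
apply: (@normB R m rho c hrho).
  rewrite -[RHS]h0.
  rewrite (partition_big (fun k : 'I_K => (Ordinal (ltn_pmod k (ltn0Sn m)) : 'I_M)) xpredT) //=.
  apply: eq_bigr => r _.
  rewrite /c rmorph_sum mulr_suml; apply: eq_big => [k|k /eqP hk].
    by [].
  rewrite rmorphM rmorphXn /= -mulrA; congr (_ * _).
  rewrite {2}(divn_eq k M) exprD mulnC exprM hrho; congr (_ * _).
  by rewrite hk.
rewrite /c (bigD1 (Ordinal hK)) //=.
apply: contra hodd => h2.
have hr : (2 %| \sum_(k < K | ((k %% M)%N == 0%N) && (k != Ordinal hK)) a k * 2 ^+ (k %/ M))%Z.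
  apply: rpred_sum => k /andP [hk1 hk2].
  have hk : (0 < k %/ M)%N.
    rewrite lt0n; apply: contra hk2 => /eqP hq; apply/eqP/val_inj => /=.
    by rewrite (divn_eq k M) hq (eqP hk1).
  apply: dvdz_mull.
  by rewrite -(prednK hk) exprS dvdz_mulr.
have := rpredB h2 hr; rewrite addrK div0n expr0 mulr1 //.
Qed.


Lemma revsum (T : Type) (idx : T) (op : SemiGroup.com_law T) (N : nat) (F : nat -> T) :
  \big[op/idx]_(1 <= j < N.+1) F (N - j)%N = \big[op/idx]_(0 <= k < N) F k.
Proof.
rewrite big_add1 /= big_nat_rev /=.
apply: eq_big_nat => k /andP [_ hk]; congr F; lia.
Qed.

Lemma geom2 (N : nat) : (\sum_(0 <= k < N) 2 ^ k < 2 ^ N)%N.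
Proof.
elim: N => [|N IH]; first by rewrite big_geq.
rewrite big_nat_recr //= expnS; lia.
Qed.

Lemma sum2_lt (N : nat) (b : nat -> bool) :
  (\sum_(1 <= j < N.+1) b j * 2 ^ (N - j) < 2 ^ N)%N.
Proof.
apply: leq_ltn_trans (geom2 N).
rewrite -(@revsum _ 0%N addn N (fun k => 2 ^ k)%N); apply: leq_sum => j _.
by case: (b j); rewrite ?mul1n ?mul0n.
Qed.

Lemma count2 (N : nat) (b : nat -> bool) : (1 <= N)%N -> b N = true ->
  (1 < \sum_(1 <= j < N.+1) b j * 2 ^ (N - j))%N ->
  (2 <= \sum_(1 <= j < N.+1) b j)%N.
Proof.
move=> hN hbN h.
rewrite big_nat_recr //= hbN subnn expn0 muln1 in h.
rewrite big_nat_recr //= hbN.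
have : (0 < \sum_(1 <= j < N) b j * 2 ^ (N - j))%N by lia.
have : (\sum_(1 <= j < N) b j * 2 ^ (N - j) <= (\sum_(1 <= j < N) b j) * 2 ^ N)%N.
  rewrite big_distrl /=; apply: leq_sum => j _.
  rewrite leq_mul2l; apply/orP; right; apply: leq_pexp2l => //; exact: leq_subr.
move: (\sum_(1 <= j < N) b j)%N => s; case: s => //=; lia.
Qed.

Lemma beta_horner (R : realType) N b (x : R) :
  (beta_poly R N b).[x] = x ^+ N - \sum_(1 <= j < N.+1) (b j)%:R * x ^+ (N - j).
Proof.
rewrite /beta_poly hornerD hornerN hornerXn horner_sum; congr (_ - _).
by apply: eq_bigr => j _; rewrite hornerZ hornerXn.
Qed.

Lemma rho_gt1 (R : realType) (N : nat) (b : nat -> bool) (rho : R) :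
  (2 <= N)%N ->
  b N = true ->
  (1 < \sum_(1 <= j < N.+1) b j * 2 ^ (N - j))%N ->
  largest_real_root (beta_poly R N b) rho -> 1 < rho.
Proof.
move=> hN hbN hsum [hroot hmax].
have hcnt := @count2 N b (ltnW hN) hbN hsum.
have h1 : (beta_poly R N b).[1] = 1 - (\sum_(1 <= j < N.+1) b j)%:R.
  rewrite beta_horner expr1n natr_sum; congr (_ - _).
  by apply: eq_bigr => j _; rewrite expr1n mulr1.
have h2 : (beta_poly R N b).[2] = (2 ^ N)%:R - (\sum_(1 <= j < N.+1) b j * 2 ^ (N - j))%:R.
  rewrite beta_horner natrX natr_sum; congr (_ - _).
  by apply: eq_bigr => j _; rewrite natrM natrX.
have hlt : (beta_poly R N b).[1] < 0.
  rewrite h1 subr_lt0 (ltr_nat R 1); lia.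
have h12 : (1 : R) <= 2 by rewrite ler1n.
have hiv : (beta_poly R N b).[1] <= 0 <= (beta_poly R N b).[2].
  rewrite (ltW hlt) /= h2 subr_ge0 ler_nat; apply: ltnW; exact: sum2_lt.
have [x /andP [x1 x2] rx] := poly_ivt h12 hiv.
have xne1 : x != 1 by apply: contraTneq rx => ->; rewrite /root (lt_eqF hlt).
apply: (lt_le_trans _ (hmax x rx)).
by rewrite lt_neqAle eq_sym xne1 x1.
Qed.

Lemma zrho_pow (R : realType) (rho : R) : 1 < rho -> Zrho rho 2 -> exists m, rho ^+ m.+1 = 2.
Proof.
move=> h1 [n [z hz]].
have hr0 : 0 <= rho by apply: le_trans (ltW h1).
have ge1 k : 1 <= rho ^+ k by apply: exprn_ege1; exact: ltW.
rewrite big_mkord in hz.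
case: (pickP (fun k : 'I_n.+1 => z k)) => [m hm | hnone]; last first.
  move: hz; rewrite big1 => [/eqP|k _]; first by rewrite pnatr_eq0.
  by rewrite hnone mul0r.
rewrite (bigD1 m) //= hm mul1r in hz.
case: (pickP (fun k : 'I_n.+1 => (k != m) && z k)) => [k /andP [hk hzk] | hnone2].
  exfalso.
  have hrest : rho ^+ k <= \sum_(i < n.+1 | i != m) (z i)%:R * rho ^+ i.
    rewrite (bigD1 k) //= hzk mul1r lerDl; apply: sumr_ge0 => i _.
    by rewrite mulr_ge0 // exprn_ge0.
  have : rho ^+ m + rho ^+ k <= 2 by rewrite hz lerD2l.
  have hrk : forall i : nat, (0 < i)%N -> rho <= rho ^+ i.
    by move=> i hi; apply: ler_eXnr => //; exact: ltW.
  case: (posnP m) => hm0.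
    have hk0 : (0 < k)%N.
      rewrite lt0n; apply: contra hk => /eqP hk0; apply/eqP/val_inj; by rewrite /= hk0 hm0.
    rewrite hm0 expr0 => h2; have := hrk _ hk0; lra.
  move=> h2; have := hrk _ hm0; have := ge1 k; lra.
exists m.-1.
rewrite prednK; last first.
  case: (posnP m) => // hm0; move: hz; rewrite hm0 expr0 big1 => [|i hi].
    by move/eqP; rewrite addr0 -subr_eq0 => /eqP; lra.
  by move: (hnone2 i); rewrite hi /= => ->; rewrite mul0r.
move: hz; rewrite big1 ?addr0 // => i hi.
by move: (hnone2 i); rewrite hi /= => ->; rewrite mul0r.
Qed.

Lemma negb_intr (R : realType) (bb : bool) : ((- (bb%:Z))%:~R : R) = - (bb%:R).
Proof. by case: bb; rewrite /= ?oppr0. Qed.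

Theorem mainTheorem8 (R : realType) (N : nat) (b : nat -> bool) (rho : R) :
  (2 <= N)%N ->
  b N = true ->
  (1 < \sum_(1 <= j < N.+1) b j * 2 ^ (N - j))%N ->
  largest_real_root (beta_poly R N b) rho ->
  ~ Zrho rho 2.
Proof.
move=> hN hbN hsum hl hz.
have hgt := @rho_gt1 R N b rho hN hbN hsum hl.
have [m hm] := @zrho_pow R rho hgt hz.
case: hl => hroot _.
apply: (@normA R m N.+1 rho (fun k => if k == N then 1%:Z else - (b (N - k)%N)%:Z) hm (ltn0Sn N)); last first.
  have -> : (0 == N) = false by apply/eqP; lia.
  by rewrite subn0 hbN.
have e : \sum_(1 <= j < N.+1) (b j)%:R * rho ^+ (N - j)%N =
         \sum_(0 <= k < N) (b (N - k)%N)%:R * rho ^+ k.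
  rewrite -(@revsum _ 0 +%R N (fun k => (b (N - k)%N)%:R * rho ^+ k)).
  apply: eq_big_nat => j /andP [h1 h2]; rewrite subKn //; lia.
move: hroot; rewrite /root beta_horner e big_mkord subr_eq0 => /eqP hr.
rewrite big_ord_recr /= eqxx hr (_ : (1%Z)%:~R = 1 :> R) // mul1r -big_split /=.
rewrite big1 // => i _.
rewrite (ltn_eqF (ltn_ord i)) negb_intr; lra.
Qed.
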